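(* Let $\mathcal{G}_1$ be an $r_1$-regular graph on $n_1$ vertices and $\mathcal{G}_2$ an $r_2$-regular graph on $n_2$ vertices. Let $\nu_{11},\nu_{12},\ldots,\nu_{1n_1}$ be the signless Laplacian eigenvalues of $\mathcal{G}_1$. Then the signless Laplacian characteristic polynomial of $\mathcal{G}_1\circledast\mathcal{G}_2$ satisfies $$f(Q_{\mathcal{G}_1\circledast \mathcal{G}_2},x)=(x-r_1n_2-n_2)^{n_1(n_2-1)}\, f(Q_{\mathcal{G}_2},x-n_2)^{n_1}\cdot \prod_{i=1}^{n_1}\big[x-n_2-n_2\nu_{1i}-n_2\chi_{Q_{\mathcal{G}_2}}(x-n_2)\big].$$
   Context: All graphs are simple, finite and undirected. For a graph $\mathcal{G}$ with adjacency matrix $A_{\mathcal{G}}$ and diagonal degree matrix $D_{\mathcal{G}}$, the signless Laplacian matrix is $Q_{\mathcal{G}}=D_{\mathcal{G}}+A_{\mathcal{G}}$. For a square matrix $M$, $f(M,x)=\det(xI-M)$. The signless Laplacian coronal of a graph $\mathcal{G}$ on $n$ vertices is the rational function $\chi_{Q_{\mathcal{G}}}(x)=\mathbf{1}_n^T(xI_n-Q_{\mathcal{G}})^{-1}\mathbf{1}_n$, with $\mathbf{1}_n$ the all-ones column vector. The graph product $\mathcal{G}_1\circledast\mathcal{G}_2$ of $\mathcal{G}_1$ (vertices $u_1,\ldots,u_{n_1}$) and $\mathcal{G}_2$ (vertices $v_1,\ldots,v_{n_2}$) has vertex set $\{a_{ik},b_{ik}:1\le i\le n_1,1\le k\le n_2\}$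 and edges: (1) $a_{ik}a_{jl}$ for all $1\le k,l\le n_2$ whenever $u_iu_j\in E(\mathcal{G}_1)$; (2) $b_{ri}b_{rj}$ for all $1\le r\le n_1$ whenever $v_iv_j\in E(\mathcal{G}_2)$; (3) $a_{ip}b_{iq}$ for all $1\le i\le n_1$, $1\le p,q\le n_2$. The identity is one of rational functions in $x$. *)

(* Defs.v *)
From mathcomp Require Import all_boot all_order all_algebra.
Set Implicit Arguments. Unset Strict Implicit. Unset Printing Implicit Defensive.
Import Order.TTheory GRing.Theory Num.Theory.
Local Open Scope ring_scope.

Definition simple_graph (T : finType) (e : rel T) : Prop :=
  (forall x y, e x y = e y x) /\ (forall x, ~~ e x x).

Definition degree (T : finType) (e : rel T) (v : T) : nat := #|[pred w | e v w]|.

Definition regular (T : finType) (e : rel T) (r : nat) : Prop :=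
  forall v, degree e v = r.

Definition signless_lap (R : nzRingType) (T : finType) (e : rel T) : 'M[R]_#|T| :=
  \matrix_(i, j) ((i == j)%:R * (degree e (enum_val i))%:R
                  + (e (enum_val i) (enum_val j))%:R).

(* f(M, x) = det(xI - M) is char_poly M; signless Laplacian coronal chi_Q(x) =
   1^T (xI - Q)^{-1} 1, evaluated at a point x. *)
Definition coronal (R : fieldType) (n : nat) (Q : 'M[R]_n) (x : R) : R :=
  \sum_(i < n) \sum_(j < n) (invmx (x%:M - Q)) i j.

(* Vertex (true,(i,k)) is a_{ik}, vertex (false,(i,k)) is b_{ik}. *)
Definition prod_graph (n1 n2 : nat) (e1 : rel 'I_n1) (e2 : rel 'I_n2)
  : rel (bool * ('I_n1 * 'I_n2)) :=
  fun u v =>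
    match u, v with
    | (true, (i, _)), (true, (j, _)) => e1 i j
    | (false, (r, i)), (false, (s, j)) => (r == s) && e2 i j
    | (true, (i, _)), (false, (j, _)) => i == j
    | (false, (i, _)), (true, (j, _)) => i == j
    end.

(* Main.v *)
Require Import Defs.
From mathcomp Require Import all_boot all_order all_algebra.
From mathcomp Require Import all_fingroup zify ring.
Set Implicit Arguments. Unset Strict Implicit. Unset Printing Implicit Defensive.
Import Order.TTheory GRing.Theory Num.Theory.
Local Open Scope ring_scope.

Lemma fst_lt n1 n2 (a : 'I_(n1*n2)) : (a %/ n2 < n1)%N.
Proof. case: n2 a => [|m] [a Ha] /=; first by rewrite muln0 in Ha. by rewrite ltn_divLR. Qed.
Lemma snd_lt n1 n2 (a : 'I_(n1*n2)) : (a %% n2 < n2)%N.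
Proof. case: n2 a => [|m] [a Ha] /=; first by rewrite muln0 in Ha. by rewrite ltn_pmod. Qed.
Lemma idx_lt n1 n2 (i : 'I_n1) (k : 'I_n2) : (i * n2 + k < n1 * n2)%N.
Proof. have := ltn_ord i; have := ltn_ord k; nia. Qed.

Definition fstI n1 n2 (a : 'I_(n1*n2)) : 'I_n1 := Ordinal (fst_lt a).
Definition sndI n1 n2 (a : 'I_(n1*n2)) : 'I_n2 := Ordinal (snd_lt a).
Definition idx n1 n2 (i : 'I_n1) (k : 'I_n2) : 'I_(n1*n2) := Ordinal (idx_lt i k).

Lemma fst_idx n1 n2 i k : fstI (@idx n1 n2 i k) = i.
Proof.
apply: val_inj => /=; have k2 := ltn_ord k.
by rewrite divnMDl ?(leq_ltn_trans _ k2) // divn_small // addn0.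
Qed.
Lemma snd_idx n1 n2 i k : sndI (@idx n1 n2 i k) = k.
Proof. by apply: val_inj => /=; rewrite modnMDl modn_small. Qed.
Lemma idx_fs n1 n2 (a : 'I_(n1*n2)) : idx (fstI a) (sndI a) = a.
Proof. by apply: val_inj => /=; rewrite -divn_eq. Qed.

Lemma idx_eq n1 n2 i k j l : (@idx n1 n2 i k == idx j l) = (i == j) && (k == l).
Proof.
apply/idP/idP => [/eqP e|/andP[/eqP-> /eqP->] //].
apply/andP; split; apply/eqP.
  by rewrite -(fst_idx i k) e fst_idx.
by rewrite -(snd_idx i k) e snd_idx.
Qed.

Lemma sum_idx (R : nmodType) n1 n2 (F : 'I_(n1*n2) -> R) :
  \sum_a F a = \sum_i \sum_k F (idx i k).
Proof.
rewrite pair_big /= (reindex (fun p : 'I_n1 * 'I_n2 => idx p.1 p.2)) //.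
exists (fun a => (fstI a, sndI a)) => [[i k] _|a _] /=.
  by rewrite fst_idx snd_idx.
by rewrite idx_fs.
Qed.

Definition kmx (R : Type) n1 n2 (F : 'I_n1 -> 'I_n2 -> 'I_n1 -> 'I_n2 -> R) : 'M[R]_(n1*n2) :=
  \matrix_(a, b) F (fstI a) (sndI a) (fstI b) (sndI b).

Lemma kmxE (R : Type) n1 n2 F i k j l : @kmx R n1 n2 F (idx i k) (idx j l) = F i k j l.
Proof. by rewrite mxE !fst_idx !snd_idx. Qed.

Lemma kmx_mul (R : comNzRingType) n1 n2 (F G : 'I_n1 -> 'I_n2 -> 'I_n1 -> 'I_n2 -> R) :
  kmx F *m kmx G = kmx (fun i k j l => \sum_p \sum_q F i k p q * G p q j l).
Proof.
apply/matrixP => a b; rewrite !mxE sum_idx; apply: eq_bigr => p _; apply: eq_bigr => q _.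
by rewrite !mxE !fst_idx !snd_idx.
Qed.

Lemma kmx_ext (R : Type) n1 n2 (A : 'M[R]_(n1*n2)) F :
  (forall i k j l, A (idx i k) (idx j l) = F i k j l) -> A = kmx F.
Proof.
move=> H; apply/matrixP => a b; rewrite mxE -H.
by rewrite !idx_fs.
Qed.

Lemma det_reindex (R : comNzRingType) n m (h : 'I_m -> 'I_n) (A : 'M[R]_n) :
  bijective h -> \det (\matrix_(a, b) A (h a) (h b)) = \det A.
Proof.
move=> hb; have e := bij_eq_card hb; rewrite !card_ord in e; subst m.
pose s := perm (bij_inj hb).
have -> : \matrix_(a, b) A (h a) (h b) = row_perm s (col_perm s A).
  by apply/matrixP => a b; rewrite !mxE !permE.
rewrite row_permE col_permE !det_mulmx !det_perm odd_permV mulrCA.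
by rewrite -signr_addb addbb expr0 mulr1.
Qed.

Lemma char_poly_eval (R : comNzRingType) n (A : 'M[R]_n) x :
  (char_poly A).[x] = \det (x%:M - A).
Proof.
rewrite /char_poly -horner_evalE -det_map_mx; congr (\det _); apply/matrixP => i j.
by rewrite !mxE /= horner_evalE hornerD hornerN hornerMn hornerX hornerC.
Qed.

Lemma sylvester (R : comNzRingType) m n (A : 'M[R]_(m, n)) (B : 'M[R]_(n, m)) c :
  c ^+ m * \det (c%:M - B *m A) = c ^+ n * \det (c%:M - A *m B).
Proof.
have E1 : \det (block_mx (c%:M : 'M_m) A B 1%:M) = \det (c%:M - A *m B).
  have -> : block_mx (c%:M : 'M_m) A B 1%:M =
            block_mx (c%:M - A *m B) A 0 1%:M *m block_mx 1%:M 0 B 1%:M.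
    by rewrite mulmx_block ?mulmx1 ?mul1mx ?mulmx0 ?mul0mx ?addr0 ?add0r subrK.
  by rewrite det_mulmx det_ublock det_lblock !det1 !mulr1.
have E2 : \det (block_mx 1%:M A B (c%:M : 'M_n)) = \det (c%:M - B *m A).
  have -> : block_mx 1%:M A B (c%:M : 'M_n) =
            block_mx 1%:M 0 B 1%:M *m block_mx 1%:M A 0 (c%:M - B *m A).
    by rewrite mulmx_block ?mulmx1 ?mul1mx ?mulmx0 ?mul0mx ?addr0 ?add0r addrC subrK.
  by rewrite det_mulmx det_ublock det_lblock !det1 !mul1r.
have E3 : block_mx (c%:M : 'M_m) 0 0 1%:M *m block_mx 1%:M A B (c%:M : 'M_n) =
          block_mx (c%:M : 'M_m) A B 1%:M *m block_mx 1%:M 0 0 (c%:M : 'M_n).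
  by rewrite !mulmx_block ?mulmx1 ?mul1mx ?mulmx0 ?mul0mx ?addr0 ?add0r mul_mx_scalar mul_scalar_mx.
have := congr1 determinant E3.
rewrite !det_mulmx E1 E2 det_ublock det_lblock !det_scalar !expr1n mulr1 mul1r.
by move=> ->; rewrite mulrC.
Qed.

Lemma schur (R : comNzRingType) m n (X11 : 'M[R]_m) X12 X21 (X22 : 'M[R]_n) Y :
  X22 *m Y = 1%:M ->
  \det (block_mx X11 X12 X21 X22) = \det (X11 - X12 *m (Y *m X21)) * \det X22.
Proof.
move=> H.
have E : block_mx X11 X12 X21 X22 *m block_mx 1%:M 0 (- (Y *m X21)) 1%:M =
         block_mx (X11 - X12 *m (Y *m X21)) X12 0 X22.
  rewrite mulmx_block ?mulmx1 ?mulmx0 ?addr0 ?add0r !mulmxN (mulmxA X22) H mul1mx subrr.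
  by [].
have := congr1 determinant E.
by rewrite det_mulmx det_lblock !det_scalar !expr1n !mulr1 det_ublock => ->.
Qed.

Lemma divDl' n2 x : (0 < n2)%N -> ((n2 + x) %/ n2 = (x %/ n2).+1)%N.
Proof. by move=> h; rewrite -{1}(mul1n n2) divnMDl // add1n. Qed.
Lemma modDl' n2 x : ((n2 + x) %% n2 = x %% n2)%N.
Proof. by rewrite -{1}(mul1n n2) modnMDl. Qed.

Lemma det_kdiag (R : comNzRingType) n1 n2 (B : 'M[R]_n2) :
  \det (kmx (fun (i : 'I_n1) (k : 'I_n2) j l => (i == j)%:R * B k l)) = \det B ^+ n1.
Proof.
elim: n1 => [|n IH]; first by rewrite det_mx00 expr0.
have -> : kmx (fun (i : 'I_n.+1) (k : 'I_n2) j l => (i == j)%:R * B k l) =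
   block_mx B 0 0 (kmx (fun (i : 'I_n) (k : 'I_n2) j l => (i == j)%:R * B k l)) :> 'M_(n2 + n * n2).
  apply/matrixP => a b; rewrite !mxE; case: (splitP a) => a1 Ha; rewrite !mxE;
    case: (splitP b) => b1 Hb; rewrite ?mxE.
  - have p2 : (0 < n2)%N by apply: leq_ltn_trans (ltn_ord a1).
    have -> : (@fstI n.+1 n2 a == @fstI n.+1 n2 b) = true.
      by apply/eqP/val_inj; rewrite /= Ha Hb !divn_small.
    by rewrite mul1r; congr (B _ _); apply: val_inj; rewrite /= ?Ha ?Hb modn_small.
  - have p2 : (0 < n2)%N by apply: leq_ltn_trans (ltn_ord a1).
    have -> : (@fstI n.+1 n2 a == @fstI n.+1 n2 b) = false.
      by apply/negbTE; rewrite -val_eqE /= Ha Hb divn_small // divDl'.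
    by rewrite mul0r.
  - have p2 : (0 < n2)%N by apply: leq_ltn_trans (ltn_ord b1).
    have -> : (@fstI n.+1 n2 a == @fstI n.+1 n2 b) = false.
      by apply/negbTE; rewrite -val_eqE /= Ha Hb divDl' // (divn_small (ltn_ord b1)).
    by rewrite mul0r.
  - have p2 : (0 < n2)%N by rewrite lt0n; apply/eqP => e; have := ltn_ord a; move: (nat_of_ord a); rewrite e muln0.
    have -> : (@fstI n.+1 n2 a == @fstI n.+1 n2 b) = (fstI a1 == fstI b1).
      by rewrite -!val_eqE /= Ha Hb !divDl'.
    by congr (_ * B _ _); apply: val_inj; rewrite /= ?Ha ?Hb modDl'.
apply: (etrans (det_ublock _ _ _)); by rewrite IH exprS.
Qed.

Lemma sl_rank (R : nzRingType) (T : finType) (e : rel T) (u v : T) :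
  signless_lap R e (enum_rank u) (enum_rank v) = (u == v)%:R * (degree e u)%:R + (e u v)%:R.
Proof. by rewrite mxE !enum_rankK (inj_eq enum_rank_inj). Qed.

Lemma card_sum (T : finType) (P : pred T) : #|[pred w | P w]| = (\sum_w (P w : nat))%N.
Proof.
rewrite -sum1_card big_mkcond /=; apply: eq_bigr => w _; rewrite inE.
by case: (P w).
Qed.

Lemma sum_V n1 n2 (F : bool * ('I_n1 * 'I_n2) -> nat) :
  (\sum_w F w = \sum_j \sum_l F (true, (j, l)) + \sum_j \sum_l F (false, (j, l)))%N.
Proof.
transitivity (\sum_b \sum_p F (b, p))%N.
  by rewrite pair_bigA; apply: eq_bigr; case.
rewrite big_bool /= !pair_bigA.
by congr (_ + _)%N; apply: eq_bigr; case.
Qed.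

Lemma sum_delta_nat n (i : 'I_n) c : (\sum_j ((i == j) * c) = c)%N.
Proof.
rewrite (bigD1 i) //= eqxx mul1n big1 ?addn0 // => j.
by rewrite eq_sym => /negbTE ->.
Qed.

Lemma deg_a n1 n2 (e1 : rel 'I_n1) (e2 : rel 'I_n2) i k :
  degree (prod_graph e1 e2) (true, (i, k)) = (degree e1 i * n2 + n2)%N.
Proof.
rewrite /degree !card_sum sum_V /=.
under eq_bigr do rewrite sum_nat_const card_ord.
under [X in (_ + X)%N]eq_bigr do rewrite sum_nat_const card_ord.
rewrite -big_distrr /= mulnC; congr (_ + _)%N.
rewrite (eq_bigr (fun j => (i == j) * n2)%N) ?sum_delta_nat // => j _.
by rewrite mulnC.
Qed.

Lemma deg_b n1 n2 (e1 : rel 'I_n1) (e2 : rel 'I_n2) i k :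
  degree (prod_graph e1 e2) (false, (i, k)) = (degree e2 k + n2)%N.
Proof.
rewrite /degree !card_sum sum_V /= addnC.
under [X in (_ + X)%N]eq_bigr do rewrite sum_nat_const card_ord mulnC.
rewrite sum_delta_nat; congr (_ + _)%N.
rewrite (bigD1 i) //= [X in (_ + X)%N]big1 ?addn0.
  by apply: eq_bigr => l _; rewrite eqxx.
move=> j; rewrite eq_sym => /negbTE ->; by rewrite big1.
Qed.

Definition psi n1 n2 (a : 'I_(n1 * n2 + n1 * n2)) : bool * ('I_n1 * 'I_n2) :=
  match split a with
  | inl p => (true, (fstI p, sndI p))
  | inr p => (false, (fstI p, sndI p))
  end.

Definition phi n1 n2 (v : bool * ('I_n1 * 'I_n2)) : 'I_(n1 * n2 + n1 * n2) :=
  match v with (b, (i, k)) => if b then lshift _ (idx i k) else rshift _ (idx i k) end.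

Lemma psiL n1 n2 (p : 'I_(n1*n2)) : psi (lshift _ p) = (true, (fstI p, sndI p)).
Proof. by rewrite /psi (unsplitK (inl p)). Qed.
Lemma psiR n1 n2 (p : 'I_(n1*n2)) : psi (rshift _ p) = (false, (fstI p, sndI p)).
Proof. by rewrite /psi (unsplitK (inr p)). Qed.

Lemma psi_bij n1 n2 : bijective (@psi n1 n2).
Proof.
exists (@phi n1 n2) => [a|[b [i k]]].
  by case: (split_ordP a) => p ->; rewrite ?psiL ?psiR /= idx_fs.
by case: b; rewrite /= ?psiL ?psiR fst_idx snd_idx.
Qed.

Lemma sum_delta (R : nzRingType) n (i : 'I_n) (F : 'I_n -> R) :
  \sum_j (i == j)%:R * F j = F i.
Proof.
rewrite (bigD1 i) //= eqxx mul1r big1 ?addr0 // => j.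
by rewrite eq_sym => /negbTE ->; rewrite mul0r.
Qed.

Lemma sum_rank (R : nmodType) (T : finType) (F : 'I_#|T| -> R) :
  \sum_q F q = \sum_(t : T) F (enum_rank t).
Proof.
rewrite (reindex (@enum_rank T)) //; exists enum_val => t _; [exact: enum_rankK | exact: enum_valK].
Qed.

Lemma prod_const_ord (R : comNzRingType) n (a : R) : \prod_(i < n) a = a ^+ n.
Proof. by rewrite big_const_ord; elim: n => //= n ->; rewrite exprS. Qed.

Lemma sum_delta_r (R : nzRingType) n (i : 'I_n) (F : 'I_n -> R) :
  \sum_j F j * (j == i)%:R = F i.
Proof.
rewrite (bigD1 i) //= eqxx mulr1 big1 ?addr0 // => j.
by move=> /negbTE ->; rewrite mulr0.
Qed.
Unset Implicit Arguments.
Theorem theorem2 (R : realFieldType) (n1 n2 r1 r2 : nat)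
  (e1 : rel 'I_n1) (e2 : rel 'I_n2) (nu : 'I_n1 -> R) :
  (0 < n1)%N -> (0 < n2)%N ->
  simple_graph e1 -> simple_graph e2 ->
  regular e1 r1 -> regular e2 r2 ->
  char_poly (signless_lap R e1) = \prod_(i < n1) ('X - (nu i)%:P) ->
  forall x : R,
    (x - n2%:R)%:M - signless_lap R e2 \in unitmx ->
    (char_poly (signless_lap R (prod_graph e1 e2))).[x] =
      (x - (r1 * n2)%:R - n2%:R) ^+ (n1 * (n2 - 1))
      * ((char_poly (signless_lap R e2)).[x - n2%:R]) ^+ n1
      * \prod_(i < n1) (x - n2%:R - n2%:R * nu i
                        - n2%:R * coronal (signless_lap R e2) (x - n2%:R)).
Proof.
move=> n1p n2p sg1 sg2 reg1 reg2 cp1 x unit2.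
set c := x - (r1 * n2)%:R - n2%:R.
set Q2 := signless_lap R e2.
set B2 := (x - n2%:R)%:M - Q2.
set chi := coronal Q2 (x - n2%:R).
pose B2' : 'M[R]_n2 := \matrix_(k, l) B2 (enum_rank k) (enum_rank l).
pose Bi' : 'M[R]_n2 := \matrix_(k, l) invmx B2 (enum_rank k) (enum_rank l).
have hB : B2' *m Bi' = 1%:M.
  apply/matrixP => k l; rewrite !mxE.
  rewrite (eq_bigr (fun j => B2 (enum_rank k) (enum_rank j) * invmx B2 (enum_rank j) (enum_rank l))); last by move=> j _; rewrite !mxE.
  rewrite -(sum_rank (fun q => B2 (enum_rank k) q * invmx B2 q (enum_rank l))).
  have /matrixP/(_ (enum_rank k) (enum_rank l)) := mulmxV unit2.
  by rewrite !mxE (inj_eq enum_rank_inj) => <-.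
have hchi : chi = \sum_k \sum_l Bi' k l.
  rewrite /chi /coronal sum_rank; apply: eq_bigr => k _; rewrite sum_rank.
  by apply: eq_bigr => l _; rewrite mxE.
pose X11 := kmx (fun (i : 'I_n1) (k : 'I_n2) j l => c *+ ((i == j) && (k == l)) - (e1 i j)%:R).
pose X12 := kmx (fun (i : 'I_n1) (k : 'I_n2) j l => - (i == j)%:R : R).
pose X22 := kmx (fun (i : 'I_n1) (k : 'I_n2) j l => (i == j)%:R * B2' k l).
pose Y := kmx (fun (i : 'I_n1) (k : 'I_n2) j l => (i == j)%:R * Bi' k l).
have hB2 : forall k l, \sum_q B2' k q * Bi' q l = (k == l)%:R.
  by move=> k l; have /matrixP/(_ k l) := hB; rewrite !mxE.
have hXY : X22 *m Y = 1%:M.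
  rewrite kmx_mul; symmetry; apply: kmx_ext => i k j l; rewrite mxE idx_eq.
  under eq_bigr => p _ do (under eq_bigr => q _ do rewrite mulrACA -mulrA; rewrite -big_distrr -big_distrr /= hB2).
  rewrite sum_delta.
  by case: (i == j); case: (k == l); rewrite /= ?mul1r ?mul0r.
have hB2e : forall k l, B2' k l = (x - n2%:R) *+ (k == l) - ((k == l)%:R * (degree e2 k)%:R + (e2 k l)%:R).
  move=> k l; rewrite mxE /B2 /Q2 !mxE ?sl_rank ?enum_rankK (inj_eq enum_rank_inj) //.
have blk : \det (x%:M - signless_lap R (prod_graph e1 e2)) = \det (block_mx X11 X12 X12 X22).
{   have hb : bijective (fun a : 'I_(n1 * n2 + n1 * n2) => enum_rank (@psi n1 n2 a)).
    case: (psi_bij n1 n2) => g g1 g2; exists (fun v => g (enum_val v)) => a /=.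
      by rewrite enum_rankK g1.
    by rewrite g2 enum_valK.
  rewrite -(det_reindex _ hb); congr (\det _).
  apply/matrixP => a b; rewrite -[a]splitK -[b]splitK.
  case: (split a) => p; case: (split b) => q;
    rewrite /= ?block_mxEul ?block_mxEur ?block_mxEdl ?block_mxEdr mxE ?psiL ?psiR.
  all: rewrite [LHS]mxE [X in _ + X]mxE sl_rank [X in X + _]mxE (inj_eq enum_rank_inj) ?deg_a ?deg_b ?reg1.
  all: rewrite /X11 /X12 /X22 mxE.
  all: move: (fstI p) (sndI p) (fstI q) (sndI q) => i k j l /=.
  - rewrite !xpair_eqE eqxx /=.
    by case: (_ && _); rewrite /c ?mulr1n ?mulr0n ?mul1r ?mul0r ?add0r ?natrD; ring.
  - by rewrite mulr0n mul0r add0r; ring.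
  - by rewrite mulr0n mul0r add0r; ring.
  - rewrite !xpair_eqE eqxx /= hB2e.
    by case: (i == j); case: (k == l); rewrite /= ?mulr1n ?mulr0n ?mul1r ?mul0r ?add0r ?addr0 ?natrD; ring. }
have detB : \det B2' = (char_poly Q2).[x - n2%:R].
  by rewrite char_poly_eval det_reindex //; exact: enum_rank_bij.
rewrite char_poly_eval blk (schur _ _ _ hXY) det_kdiag detB.
pose U : 'M[R]_(n1 * n2, n1) := \matrix_(a, j) (fstI a == j)%:R.
pose V : 'M[R]_(n1, n1 * n2) := \matrix_(i, b) (i == fstI b)%:R.
pose K : 'M[R]_n1 := \matrix_(i, j) ((e1 i j)%:R + chi *+ (i == j)).
have YX : Y *m X12 = kmx (fun i k j l => - ((i == j)%:R * \sum_q Bi' k q)).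
  rewrite kmx_mul; apply: kmx_ext => i k j l; rewrite kmxE.
  under eq_bigr => p _ do (under eq_bigr => q _ do rewrite mulrAC -mulrA; rewrite -big_distrr /=).
  by rewrite sum_delta -big_distrr /= mulNr.
have XYX : X12 *m (Y *m X12) = kmx (fun i k j l => (i == j)%:R * chi).
  rewrite YX kmx_mul; apply: kmx_ext => i k j l; rewrite kmxE.
  under eq_bigr => p _ do (under eq_bigr => q _ do rewrite mulrNN; rewrite -big_distrr /=).
  by rewrite sum_delta -big_distrr /= hchi.
have hS : X11 - X12 *m (Y *m X12) = c%:M - U *m (K *m V).
  rewrite XYX; apply/matrixP => a b; rewrite -[a]idx_fs -[b]idx_fs.
  move: (fstI a) (sndI a) (fstI b) (sndI b) => i k j l.
  rewrite !mxE !fst_idx !snd_idx idx_eq.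
  under eq_bigr => p _ do (rewrite !mxE fst_idx; under eq_bigr => q _ do rewrite !mxE fst_idx).
  under eq_bigr => p _ do rewrite sum_delta_r.
  rewrite sum_delta.
  by rewrite mulr_natl opprD addrA.
have hVU : K *m V *m U = n2%:R *: K.
  rewrite -mulmxA.
  have -> : V *m U = n2%:R%:M.
    apply/matrixP => i j; rewrite !mxE sum_idx.
    under eq_bigr => p _ do (under eq_bigr => q _ do rewrite !mxE fst_idx;
        rewrite sumr_const card_ord -mulrnAr).
    by rewrite sum_delta; case: (i == j); rewrite ?mulr1n ?mulr0n ?mul0rn.
  by rewrite mul_mx_scalar.
have syl2 : \det (c%:M - U *m (K *m V)) = c ^+ (n1 * (n2 - 1)) * \det (c%:M - n2%:R *: K).
  have P : 'X ^+ (n1 * n2) * char_poly (K *m V *m U) = 'X ^+ n1 * char_poly (U *m (K *m V)).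
    by rewrite /char_poly /char_poly_mx !map_mxM; exact: sylvester.
  have eN : (n1 * n2 = n1 + n1 * (n2 - 1))%N.
    by rewrite mulnBr muln1 subnKC // leq_pmulr.
  have Xe : 'X ^+ (n1 * n2) = 'X ^+ n1 * 'X ^+ (n1 * (n2 - 1)) :> {poly R}.
    by rewrite -exprD -eN.
  rewrite hVU Xe -mulrA in P.
  have P' := mulfI (expf_neq0 _ (negbT (polyX_eq0 R))) P.
  have := congr1 (horner^~ c) P'.
  by rewrite /= hornerM hornerXn !char_poly_eval => <-.
have hK : \det (c%:M - n2%:R *: K) =
   \prod_i (x - n2%:R - n2%:R * nu i - n2%:R * chi).
  pose y := c / n2%:R - chi + r1%:R.
  have n2nz : n2%:R != 0 :> R by rewrite pnatr_eq0 -lt0n.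
  have -> : c%:M - n2%:R *: K = n2%:R *: \matrix_(i, j) (y%:M - signless_lap R e1) (enum_rank i) (enum_rank j).
    apply/matrixP => i j; rewrite !mxE !enum_rankK (inj_eq enum_rank_inj) reg1.
    case: (i == j); rewrite /y ?mulr1n ?mulr0n ?mul1r ?mul0r; field; rewrite ?n2nz //.
  rewrite detZ det_reindex; last exact: enum_rank_bij.
  rewrite -char_poly_eval cp1 horner_prod -prod_const_ord -big_split /=.
  apply: eq_bigr => i _; rewrite hornerXsubC /y /c natrM; field; rewrite ?n2nz //.
by rewrite hS syl2 hK mulrAC.
Qed.
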